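(* Let $M$ and $\tilde M$ be Markov decision processes over the same action space $\mathcal{A}$, with state spaces $\mathcal{S}$ and $\tilde{\mathcal{S}}=(\mathcal{S}\setminus\{s_0\})\cup\{s_0^1,s_0^2\}$ respectively, where $s_0^1,s_0^2$ form a split of the state $s_0\in\mathcal{S}$. Let $\pi^*:\mathcal{S}\to\mathcal{A}$ be an optimal policy in $M$. Then there exists a policy $\tilde\pi:\tilde{\mathcal{S}}\to\mathcal{A}$ with $\tilde\pi(s_0^1)=\tilde\pi(s_0^2)=\pi^*(s_0)$ such that $V^{\tilde\pi}_{\tilde M}=V^{\pi^*}_M$, and for every policy $\pi'\neq\tilde\pi$ on $\tilde{\mathcal{S}}$ we have $V^{\pi'}_{\tilde M}\le V^{\tilde\pi}_{\tilde M}$.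
   Context: $\tilde M$ being obtained from $M$ by splitting $s_0$ into $s_0^1,s_0^2$ means: writing $\phi:\tilde{\mathcal{S}}\to\mathcal{S}$ for the map sending $s_0^1,s_0^2$ to $s_0$ and fixing all other states, $\tilde M$ is itself Markovian and for every $\tilde s\in\tilde{\mathcal{S}}$ and $a\in\mathcal{A}$ the reward satisfies $\tilde R(\tilde s,a)=R(\phi(\tilde s),a)$, and the transition probabilities satisfy $\tilde P(s'\mid\tilde s,a)=P(s'\mid\phi(\tilde s),a)$ for $s'\neq s_0$ and $\tilde P(s_0^1\mid\tilde s,a)+\tilde P(s_0^2\mid\tilde s,a)=P(s_0\mid\phi(\tilde s),a)$, with $\tilde P(\cdot\mid s_0^1,a)=\tilde P(\cdot\mid s_0^2,a)$ and $\tilde R(s_0^1,a)=\tilde R(s_0^2,a)$ (the initial state distribution is split analogously). $V^{\pi}_M$ denotes the value (expected discounted return, discount $\gamma$) of policy $\pi$ in MDP $M$. *)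

(* Defs.v *)
From HB Require Import structures.
From mathcomp Require Import all_boot all_order all_algebra.
From mathcomp Require Import all_classical all_reals.
From mathcomp Require Import topology normedtype sequences.
Set Implicit Arguments. Unset Strict Implicit. Unset Printing Implicit Defensive.
Import Order.TTheory GRing.Theory Num.Theory.
Import numFieldNormedType.Exports.
Local Open Scope ring_scope.

(* A finite discounted MDP: transition kernel P s a s' = P(s' | s, a),
   reward r s a, initial state distribution mu. *)
Record MDP (S A : finType) (R : realType) := mkMDP {
  trans : S -> A -> S -> R;
  rew   : S -> A -> R;
  init  : S -> R }.

Definition is_distr (S : finType) (R : realType) (d : S -> R) : Prop :=
  (forall s, 0 <= d s) /\ \sum_(s : S) d s = 1.

Definition is_MDP (S A : finType) (R : realType) (M : MDP S A R) : Prop :=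
  is_distr (init M) /\ forall s a, is_distr (trans M s a).

Fixpoint state_dist (S A : finType) (R : realType) (M : MDP S A R)
  (pi : S -> A) (t : nat) : S -> R :=
  match t with
  | 0 => init M
  | t.+1 => fun s' => \sum_(s : S) state_dist M pi t s * trans M s (pi s) s'
  end.

Definition value (S A : finType) (R : realType) (gamma : R) (M : MDP S A R)
  (pi : S -> A) : R :=
  limn (fun n : nat => \sum_(0 <= t < n)
    gamma ^+ t * \sum_(s : S) state_dist M pi t s * rew M s (pi s)).

Definition optimal_policy (S A : finType) (R : realType) (gamma : R)
  (M : MDP S A R) (pi : S -> A) : Prop :=
  forall pi' : S -> A, value gamma M pi' <= value gamma M pi.

(* phi : T -> S identifies T with (S \ {s0}) ∪ {t1, t2}, t1 t2 the split of s0. *)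
Definition split_states (S T : finType) (phi : T -> S) (s0 : S) (t1 t2 : T) : Prop :=
  [/\ t1 != t2,
      (forall x, phi x = s0 <-> (x = t1 \/ x = t2)),
      (forall x y, phi x != s0 -> phi y != s0 -> phi x = phi y -> x = y) &
      (forall s, exists x, phi x = s)].

Definition split_MDP (S T A : finType) (R : realType) (M : MDP S A R)
  (Mt : MDP T A R) (phi : T -> S) (s0 : S) (t1 t2 : T) : Prop :=
  split_states phi s0 t1 t2 /\
  is_MDP Mt /\
  (forall x a, rew Mt x a = rew M (phi x) a) /\
  (forall x a y, phi y != s0 -> trans Mt x a y = trans M (phi x) a (phi y)) /\
  (forall x a, trans Mt x a t1 + trans Mt x a t2 = trans M (phi x) a s0) /\
  (forall a, trans Mt t1 a = trans Mt t2 a) /\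
  (forall a, rew Mt t1 a = rew Mt t2 a) /\
  (forall y, phi y != s0 -> init Mt y = init M (phi y)) /\
  init Mt t1 + init Mt t2 = init M s0.

(* Main.v *)
Require Import Defs.
From HB Require Import structures.
From mathcomp Require Import all_boot all_order all_algebra.
From mathcomp Require Import all_classical all_reals.
From mathcomp Require Import topology normedtype sequences.
From mathcomp Require Import lra.
Import Order.TTheory GRing.Theory Num.Theory.
Import numFieldNormedType.Exports.
Local Open Scope ring_scope.
Local Open Scope classical_set_scope.

Fixpoint vn (R : realType) (X : finType) (g : R) (P : X -> X -> R) (r : X -> R)
  (n : nat) (x : X) : R :=
  match n with
  | 0 => 0
  | n.+1 => r x + g * \sum_(y : X) P x y * @vn R X g P r n y
  end.

Fixpoint fwd (R : realType) (X : finType) (P : X -> X -> R) (d : X -> R)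
  (t : nat) (y : X) : R :=
  match t with
  | 0 => d y
  | t.+1 => \sum_(x : X) @fwd R X P d t x * P x y
  end.
Arguments vn {R X}.
Arguments fwd {R X}.

Lemma fwd_shift (R : realType) (X : finType) (P : X -> X -> R) (d : X -> R) t y :
  fwd P d t.+1 y = fwd P (fwd P d 1) t y.
Proof.
elim: t y => [|t IH] y //.
transitivity (\sum_(x : X) fwd P d t.+1 x * P x y); first by [].
by apply: eq_bigr => x _; rewrite IH.
Qed.

Lemma fwd_shiftE (R : realType) (X : finType) (P : X -> X -> R) (d : X -> R) t :
  fwd P d t.+1 = fwd P (fwd P d 1) t.
Proof. by apply: funext => y; exact: fwd_shift. Qed.

Lemma ident (R : realType) (X : finType) (g : R) (P : X -> X -> R) (r : X -> R) n :
  forall d : X -> R,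
  \sum_(0 <= t < n) g ^+ t * \sum_(x : X) fwd P d t x * r x =
  \sum_(x : X) d x * vn g P r n x.
Proof.
elim: n => [|n IH] d.
  by rewrite big_geq // ; under eq_bigr do rewrite /= mulr0; rewrite big1.
rewrite big_nat_recl //.
under eq_bigr => i _ do rewrite exprS -mulrA fwd_shiftE.
rewrite -mulr_sumr IH expr0 mul1r.
transitivity (\sum_x d x * r x + g * \sum_x (\sum_z d z * P z x) * vn g P r n x); first by [].
transitivity (\sum_x d x * (r x + g * \sum_y P x y * vn g P r n y)); last by [].
under [in RHS]eq_bigr do rewrite mulrDr.
rewrite big_split /=; congr (_ + _).
have -> : \sum_x (\sum_z d z * P z x) * vn g P r n x =
    \sum_z d z * \sum_x P z x * vn g P r n x.
  under eq_bigr do rewrite mulr_suml.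
  rewrite exchange_big /=; apply: eq_bigr => z _; rewrite mulr_sumr.
  by apply: eq_bigr => x _; rewrite mulrA.
by rewrite mulr_sumr; apply: eq_bigr => z _; rewrite mulrCA.
Qed.

Lemma sd_fwd (S A : finType) (R : realType) (M : MDP S A R) (pi : S -> A) t s :
  state_dist M pi t s = fwd (fun x y => trans M x (pi x) y) (init M) t s.
Proof.
elim: t s => [|t IH] s //.
transitivity (\sum_(x : S) state_dist M pi t x * trans M x (pi x) s); first by [].
transitivity (\sum_(x : S) fwd (fun x y => trans M x (pi x) y) (init M) t x * trans M x (pi x) s); last by [].
by apply: eq_bigr => x _; rewrite IH.
Qed.

Lemma value_vn (S A : finType) (R : realType) (gamma : R) (M : MDP S A R) (pi : S -> A) :
  value gamma M pi = limn (fun n => \sum_(x : S) init M x *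
    vn gamma (fun x y => trans M x (pi x) y) (fun x => rew M x (pi x)) n x).
Proof.
rewrite /value; congr (limn _); apply: funext => n.
rewrite -ident; apply: eq_bigr => t _; congr (_ * _); apply: eq_bigr => x _.
by rewrite sd_fwd.
Qed.

Lemma compare (R : realType) (X : finType) (g : R) (P : X -> X -> R) (D : X -> R) :
  0 <= g -> g < 1 -> (forall x y, 0 <= P x y) -> (forall x, \sum_(y : X) P x y = 1) ->
  (forall x, D x <= g * \sum_(y : X) P x y * D y) -> forall x, D x <= 0.
Proof.
move=> g0 g1 P0 P1 HD x.
have [m _ Hm] := @Order.TotalTheory.arg_maxP _ _ X x xpredT D isT.
have Dm : D m <= g * D m.
  apply: (le_trans (HD m)); apply: ler_wpM2l => //.
  rewrite -[D m]mul1r -(P1 m) mulr_suml.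
  by apply: ler_sum => y _; apply: ler_wpM2l => //; apply: Hm.
have : (1 - g) * D m <= 0 by rewrite mulrBl mul1r subr_le0.
rewrite pmulr_rle0 ?subr_gt0 // => Dm0.
exact: le_trans (Hm x isT) Dm0.
Qed.

Lemma vn_diff_bound (R : realType) (X : finType) (g : R) (P : X -> X -> R) (r : X -> R) :
  0 <= g -> (forall x y, 0 <= P x y) -> (forall x, \sum_(y : X) P x y = 1) ->
  forall t x, `|vn g P r t.+1 x - vn g P r t x| <= (\sum_(z : X) `|r z|) * g ^+ t.
Proof.
move=> g0 P0 P1; elim=> [|t IH] x.
  rewrite expr0 mulr1 /= big1 ?mulr0 ?addr0 ?subr0; last by move=> y _; rewrite mulr0.
  by rewrite (bigD1 x) //= lerDl sumr_ge0.
have -> : vn g P r t.+2 x - vn g P r t.+1 x =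
    g * \sum_(y : X) P x y * (vn g P r t.+1 y - vn g P r t y).
  transitivity ((r x + g * \sum_(y : X) P x y * vn g P r t.+1 y) -
                (r x + g * \sum_(y : X) P x y * vn g P r t y)); first by [].
  rewrite opprD addrACA subrr add0r -mulrBr -sumrB.
  by congr (_ * _); apply: eq_bigr => y _; rewrite mulrBr.
rewrite normrM ger0_norm // exprS mulrCA; apply: ler_wpM2l => //.
apply: (le_trans (ler_norm_sum _ _ _)).
rewrite -[_ * g ^+ t]mul1r -(P1 x) mulr_suml; apply: ler_sum => y _.
by rewrite normrM ger0_norm //; apply: ler_wpM2l.
Qed.

Definition Vf (R : realType) (X : finType) (g : R) (P : X -> X -> R) (r : X -> R) (x : X) : R :=
  limn (fun n => vn g P r n x).
Arguments Vf {R X}.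

Lemma vn_cvg (R : realType) (X : finType) (g : R) (P : X -> X -> R) (r : X -> R) :
  0 <= g -> g < 1 -> (forall x y, 0 <= P x y) -> (forall x, \sum_(y : X) P x y = 1) ->
  (forall x, vn g P r n x @[n --> \oo] --> Vf g P r x) /\
    (forall x, Vf g P r x = r x + g * \sum_(y : X) P x y * Vf g P r y).
Proof.
move=> g0 g1 P0 P1.
have cv : forall x, cvgn (fun n => vn g P r n x).
  move=> x.
  have -> : (fun n => vn g P r n x) = series (fun t => vn g P r t.+1 x - vn g P r t x).
    apply: funext => n; rewrite seriesEnat /= telescope_sumr //= subr0 //.
  apply: normed_cvg.
  apply: (@series_le_cvg _ _ (geometric (\sum_(z : X) `|r z|) g)).
  - by move=> n; exact: normr_ge0.
  - by move=> n; rewrite /geometric /= mulr_ge0 ?sumr_ge0 ?exprn_ge0.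
  - by move=> n; exact: vn_diff_bound.
  - by apply: is_cvg_geometric_series; rewrite ger0_norm.
split; first by move=> x; exact: cv.
move=> x.
have H : (fun n => vn g P r n.+1 x) @ \oo --> r x + g * \sum_(y : X) P x y * limn (fun n => vn g P r n y).
  apply: cvgD; first exact: cvg_cst.
  apply: cvgMl_tmp.
  apply: cvg_big => //.
  - exact: add_continuous.
  - by move=> y _; apply: cvgMl_tmp; exact: cv.
apply: cvg_lim; first exact: Rhausdorff.
pose L := r x + g * \sum_(y : X) P x y * limn (fun n => vn g P r n y).
have K := @cvg_shiftS R (fun n => vn g P r n x) (nbhs L).
rewrite -K; exact: H.
Qed.

Lemma value_exists (S A : finType) (R : realType) (gamma : R) (M : MDP S A R) (pi : S -> A) :
  0 <= gamma -> gamma < 1 -> is_MDP M ->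
  let V := Vf gamma (fun x y => trans M x (pi x) y) (fun x => rew M x (pi x)) in
    (forall x, V x = rew M x (pi x) + gamma * \sum_(y : S) trans M x (pi x) y * V y) /\
    value gamma M pi = \sum_(x : S) init M x * V x.
Proof.
move=> g0 g1 [_ HP].
move=> V.
have [cvV bell] := @vn_cvg R S gamma (fun x y => trans M x (pi x) y)
  (fun x => rew M x (pi x)) g0 g1 (fun x y => (HP x (pi x)).1 y) (fun x => (HP x (pi x)).2).
split => //.
rewrite value_vn; apply: cvg_lim; first exact: Rhausdorff.
apply: cvg_big => //; first exact: add_continuous.
by move=> x _; apply: cvgMl_tmp; exact: cvV.
Qed.

Lemma agg (S T : finType) (R : realType) (phi : T -> S) (s0 : S) (t1 t2 : T) :
  split_states phi s0 t1 t2 -> forall (gT : T -> R) (gS : S -> R) (f : S -> R),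
  (forall y, phi y != s0 -> gT y = gS (phi y)) -> gT t1 + gT t2 = gS s0 ->
  \sum_(y : T) gT y * f (phi y) = \sum_(s : S) gS s * f s.
Proof.
case=> t12 Hs0 Hinj Hsurj gT gS f H1 H2.
have p1 : phi t1 = s0 by apply/Hs0; left.
have p2 : phi t2 = s0 by apply/Hs0; right.
rewrite (partition_big phi xpredT) //=; apply: eq_bigr => s _.
case: (eqVneq s s0) => [->|ns].
  rewrite (bigD1 t1) /=; last by rewrite p1 eqxx.
  rewrite (big_pred1 t2); last first.
    move=> y /=; apply/idP/idP.
      by case/andP=> /eqP /Hs0 [->|->]; rewrite ?eqxx.
    by move/eqP->; rewrite p2 eqxx eq_sym t12.
  by rewrite p1 p2 -mulrDl H2.
have [y py] := Hsurj s.
rewrite (big_pred1 y); last first.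
  move=> z /=; apply/idP/idP; last by move/eqP->; rewrite py.
  move/eqP=> pz; apply/eqP; apply: Hinj; rewrite ?pz ?py //.
by rewrite H1 py.
Qed.
Arguments agg {S T R phi s0 t1 t2}.

Lemma sum_swap (R : realType) (X Y : finType) (a : X -> R) (b : X -> Y -> R) (c : Y -> R) :
  \sum_(y : Y) (\sum_(x : X) a x * b x y) * c y = \sum_(x : X) a x * \sum_(y : Y) b x y * c y.
Proof.
under eq_bigr do rewrite mulr_suml.
rewrite exchange_big /=; apply: eq_bigr => x _; rewrite mulr_sumr.
by apply: eq_bigr => y _; rewrite mulrA.
Qed.

Lemma dist_agg (S T A : finType) (R : realType) (M : MDP S A R) (Mt : MDP T A R)
  (phi : T -> S) (s0 : S) (t1 t2 : T) (pi : S -> A) :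
  split_MDP M Mt phi s0 t1 t2 -> forall t (f : S -> R),
  \sum_(y : T) state_dist Mt (fun x => pi (phi x)) t y * f (phi y) =
  \sum_(s : S) state_dist M pi t s * f s.
Proof.
move=> [Hsplit [HMt [Hrew [Htr [Htr0 [Htt [Hrt [Hinit Hinit0]]]]]]]].
elim=> [|t IH] f.
  exact (agg Hsplit (init Mt) (init M) f Hinit Hinit0).
transitivity (\sum_(y : T) (\sum_(x : T) state_dist Mt (fun x => pi (phi x)) t x *
   trans Mt x (pi (phi x)) y) * f (phi y)); first by [].
transitivity (\sum_(s : S) (\sum_(x : S) state_dist M pi t x * trans M x (pi x) s) * f s);
  last by [].
rewrite !sum_swap.
under eq_bigr => x _ do rewrite (agg Hsplit (trans Mt x (pi (phi x))) (trans M (phi x) (pi (phi x)))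
  _ (fun y => Htr x _ y) (Htr0 x _)).
exact: (IH (fun s' => \sum_(s : S) trans M s' (pi s') s * f s)).
Qed.
Arguments dist_agg {S T A R M Mt phi s0 t1 t2 pi}.

Local Close Scope classical_set_scope.

Theorem theorem1 (R : realType) (S T A : finType) (gamma : R)
  (M : MDP S A R) (Mt : MDP T A R) (phi : T -> S) (s0 : S) (t1 t2 : T)
  (pi_star : S -> A) :
  0 <= gamma -> gamma < 1 ->
  is_MDP M ->
  split_MDP M Mt phi s0 t1 t2 ->
  optimal_policy gamma M pi_star ->
  exists pit : T -> A,
    [/\ pit t1 = pi_star s0, pit t2 = pi_star s0,
        value gamma Mt pit = value gamma M pi_star &
        forall pi' : T -> A, pi' <> pit -> value gamma Mt pi' <= value gamma Mt pit].
Proof.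
move=> g0 g1 HM Hs Hopt.
have Hs' := Hs.
move: Hs' => [Hsplit [HMt [Hrew [Htr [Htr0 [Htt [Hrt [Hinit Hinit0]]]]]]]].
have [_ Hs0 _ _] := Hsplit.
have p1 : phi t1 = s0 by apply/Hs0; left.
have p2 : phi t2 = s0 by apply/Hs0; right.
have Heq : value gamma Mt (fun x => pi_star (phi x)) = value gamma M pi_star.
  rewrite /value; congr (limn _); apply: funext => n; apply: eq_bigr => t _.
  congr (_ * _).
  under eq_bigr do rewrite Hrew.
  exact: (dist_agg Hs t (fun s => rew M s (pi_star s))).
exists (fun x => pi_star (phi x)); split; rewrite ?p1 ?p2 //.
move=> pi' _; rewrite Heq.
pose VS (pi : S -> A) := Vf gamma (fun x y => trans M x (pi x) y) (fun x => rew M x (pi x)).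
have [HMi HMP] := HM.
pose pio := Order.arg_max [ffun x => pi_star x] xpredT (fun f : {ffun S -> A} => \sum_(s : S) VS f s).
have Hmax : forall f : {ffun S -> A}, \sum_(s : S) VS f s <= \sum_(s : S) VS pio s.
  rewrite /pio; case: (@Order.TotalTheory.arg_maxP _ _ _ [ffun x => pi_star x] xpredT
    (fun f : {ffun S -> A} => \sum_(s : S) VS f s) isT) => f0 _ Hf f; exact: Hf.
pose U := VS pio.
have [bellU valU] := @value_exists _ _ _ gamma M pio g0 g1 HM.
have super : forall s a, rew M s a + gamma * \sum_(y : S) trans M s a y * U y <= U s.
  move=> s a; rewrite leNgt; apply/negP => Hlt.
  pose pi2 := [ffun x => if x == s then a else pio x].
  have [bell2 _] := @value_exists _ _ _ gamma M pi2 g0 g1 HM.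
  have UV : forall x, U x - VS pi2 x <= 0.
    apply: (@compare _ _ gamma (fun x y => trans M x (pi2 x) y)) => //.
    - by move=> x y; exact: (HMP x (pi2 x)).1.
    - by move=> x; exact: (HMP x (pi2 x)).2.
    move=> x.
    have Ux : U x <= rew M x (pi2 x) + gamma * \sum_(y : S) trans M x (pi2 x) y * U y.
      rewrite ffunE; case: (eqVneq x s) => [->|_]; first exact: ltW.
      by rewrite [U x]bellU.
    rewrite [VS pi2 x]bell2.
    have -> : \sum_(y : S) trans M x (pi2 x) y * (U y - VS pi2 y) =
       \sum_(y : S) trans M x (pi2 x) y * U y - \sum_(y : S) trans M x (pi2 x) y * VS pi2 y.
      by rewrite -sumrB; apply: eq_bigr => y _; rewrite mulrBr.
    rewrite mulrBr; move: Ux; lra.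
  have Hs2 : U s < VS pi2 s.
    apply: (lt_le_trans Hlt); rewrite [VS pi2 s]bell2 ffunE eqxx lerD2l.
    apply: ler_wpM2l => //; apply: ler_sum => y _; apply: ler_wpM2l.
      exact: (HMP s a).1.
    by rewrite -subr_le0.
  have := Hmax pi2; apply/negP; rewrite -ltNge.
  rewrite (bigD1 s) //= [X in _ < X](bigD1 s) //=.
  apply: ltr_leD => //; apply: ler_sum => x _; by rewrite -subr_le0.
have HpiU : \sum_(s : S) init M s * U s <= value gamma M pi_star.
  by rewrite -valU; exact: Hopt.
have [HMti HMtP] := HMt.
have [bellV valV] := @value_exists _ _ _ gamma Mt pi' g0 g1 HMt.
set V' := Vf _ _ _ in bellV valV.
have VW : forall x, V' x - U (phi x) <= 0.
  apply: (@compare _ _ gamma (fun x y => trans Mt x (pi' x) y)) => //.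
  - by move=> x y; exact: (HMtP x (pi' x)).1.
  - by move=> x; exact: (HMtP x (pi' x)).2.
  move=> x.
  have Wx : rew Mt x (pi' x) + gamma * \sum_(y : T) trans Mt x (pi' x) y * U (phi y) <= U (phi x).
    rewrite Hrew (agg Hsplit (trans Mt x (pi' x)) (trans M (phi x) (pi' x)) U
      (fun y => Htr x _ y) (Htr0 x _)).
    exact: super.
  rewrite [V' x]bellV.
  have -> : \sum_(y : T) trans Mt x (pi' x) y * (V' y - U (phi y)) =
     \sum_(y : T) trans Mt x (pi' x) y * V' y - \sum_(y : T) trans Mt x (pi' x) y * U (phi y).
    by rewrite -sumrB; apply: eq_bigr => y _; rewrite mulrBr.
  rewrite mulrBr; move: Wx; lra.
rewrite valV; apply: le_trans HpiU.
rewrite -(agg Hsplit (init Mt) (init M) U Hinit Hinit0).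
apply: ler_sum => y _; apply: ler_wpM2l; first exact: HMti.1.
by rewrite -subr_le0.
Qed.
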